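(* Let $(\mathbf{x},\mathbf{F})$ be an LP seed of rank $n$ with $\hat F_k=F_k$ for all $k\in[1,n]$. Then for all $i\ne k$, $F_i$ is not equal to a unit multiple of $F_k$; consequently any two distinct exchange polynomials $F_i,F_k$ ($i\neq k$) are coprime in $R[x_1,\dots,x_n]$.
   Context: $R$ is a unique factorization domain containing $\mathbb{Z}$ and $\mathcal{F}$ is the field of rational functions in $n$ variables over $\mathrm{Frac}(R)$. An LP seed of rank $n$ is a pair $(\mathbf{x},\mathbf{F})$ where $\mathbf{x}=\{x_1,\dots,x_n\}$ is a transcendence basis of $\mathcal{F}$ over $\mathrm{Frac}(R)$ and $\mathbf{F}=\{F_1,\dots,F_n\}$ are irreducible polynomials in $R[x_1,\dots,x_n]$ with $x_j\nmid F_i$ for all $i,j$ and $F_i$ not involving $x_i$. The exchange Laurent polynomial is $\hat F_j=F_j/\prod_{k\neq j}x_k^{a_k}$, with $a_k\in\mathbb{Z}_{\ge0}$ maximal such that $F_k^{a_k}$ divides $F_j|_{x_k\leftarrow F_k/x'_k}$ in $R[x_1,\dots,x_{k-1},(x'_k)^{-1},x_{k+1},\dots,x_n]$ ($x'_k$ a new indeterminate). *)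

(* Defs.v *)
From HB Require Import structures.
From mathcomp Require Import all_boot all_order all_algebra.
From mathcomp Require Import fraction.
From mathcomp.multinomials Require Import mpoly.

Set Implicit Arguments.
Unset Strict Implicit.
Unset Printing Implicit Defensive.

Import Order.TTheory GRing.Theory.
Local Open Scope ring_scope.

Definition rdvd (A : idomainType) (b a : A) : Prop := exists c : A, a = c * b.

Definition associated (A : idomainType) (a b : A) : Prop :=
  exists2 u : A, u \is a GRing.unit & a = u * b.

Definition irred (A : idomainType) (a : A) : Prop :=
  [/\ a != 0, a \isn't a GRing.unit &
      forall b c : A, a = b * c -> b \is a GRing.unit \/ c \is a GRing.unit].

Definition is_UFD (A : idomainType) : Prop :=
  (forall a : A, a != 0 -> a \isn't a GRing.unit ->
     exists s : seq A, (forall b, b \in s -> irred b) /\ a = \prod_(b <- s) b)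
  /\
  (forall s t : seq A, (forall b, b \in s -> irred b) ->
     (forall b, b \in t -> irred b) ->
     \prod_(b <- s) b = \prod_(b <- t) b ->
     exists t' : seq A, perm_eq t t' /\ size s = size t' /\
       forall i, (i < size s)%N -> associated (nth 0 s i) (nth 0 t' i)).

Definition rcoprime (A : idomainType) (a b : A) : Prop :=
  forall d : A, rdvd d a -> rdvd d b -> d \is a GRing.unit.

(* The cluster variables x_1..x_n are modelled by the formal variables 'X_i
   of {mpoly R[n]} (a transcendence basis of the rational function field). *)

Section LP.
Variables (R : idomainType) (n : nat).

Definition not_involving (p : {mpoly R[n]}) (i : 'I_n) : Prop :=
  forall m, m \in msupp p -> m i = 0%N.

Definition is_LP_seed (F : 'I_n -> {mpoly R[n]}) : Prop :=
  [/\ forall i, irred (F i),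
      forall i j, ~ rdvd ('X_j : {mpoly R[n]}) (F i) &
      forall i, not_involving (F i) i].

(* Substitution x_k <- F_k / x'_k.  The result lives in
   R[x_1,..,x_{k-1},(x'_k)^{-1},x_{k+1},..,x_n]; we represent this polynomial
   ring by {mpoly R[n]} itself, the k-th variable 'X_k standing for (x'_k)^{-1}. *)
Definition subst_exch (F : 'I_n -> {mpoly R[n]}) (k : 'I_n) (p : {mpoly R[n]})
  : {mpoly R[n]} :=
  p \mPo [tuple (if i == k then F k * 'X_i else 'X_i) | i < n].

Definition exch_exponent (F : 'I_n -> {mpoly R[n]}) (j k : 'I_n) (a : nat)
  : Prop :=
  rdvd (F k ^+ a) (subst_exch F k (F j)) /\
  ~ rdvd (F k ^+ a.+1) (subst_exch F k (F j)).

Definition is_hatF (F : 'I_n -> {mpoly R[n]}) (j : 'I_n)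
  (G : {fraction {mpoly R[n]}}) : Prop :=
  exists a : 'I_n -> nat,
    (forall k, k != j -> exch_exponent F j k (a k)) /\
    G = tofrac (F j) / \prod_(k < n | k != j) (tofrac ('X_k : {mpoly R[n]})) ^+ a k.

End LP.

(* Main.v *)
Require Import Defs.
From HB Require Import structures.
From mathcomp Require Import all_boot all_order all_algebra.
From mathcomp Require Import fraction.
From mathcomp.multinomials Require Import mpoly.
Import GRing.Theory.
Local Open Scope ring_scope.

Lemma subst_notinv (R : idomainType) (n : nat) (F : 'I_n -> {mpoly R[n]})
  (k : 'I_n) (p : {mpoly R[n]}) :
  not_involving p k -> subst_exch F k p = p.
Proof.
move=> hp; rewrite /subst_exch comp_mpolyEX {3}(mpolyE p).
rewrite !big_seq; apply: eq_bigr => m hm; congr (_ *: _).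
rewrite comp_mpolyX mpolyXE_id; apply: eq_bigr => i _.
rewrite tnth_mktuple; case: eqP => // ->.
by rewrite (hp m hm) !expr0.
Qed.

Theorem proposition4p9 (R : idomainType) (n : nat)
  (F : 'I_n -> {mpoly R[n]}) :
  is_UFD R ->
  injective (fun z : int => z%:~R : R) ->
  is_LP_seed F ->
  (forall k : 'I_n, is_hatF F k (tofrac (F k))) ->
  forall i k : 'I_n, i != k ->
    ~ associated (F i) (F k) /\ rcoprime (F i) (F k).
Proof.
move=> _ _ [Firr _ Fni] hat i k ik.
have nassoc : ~ associated (F i) (F k).
  case=> u uU Fiu.
  have [a [ha ea]] := hat i.
  have [_ hnd] : exch_exponent F i k (a k) by apply: ha; rewrite eq_sym.
  have apos : (0 < a k)%N.
    case: (a k) hnd => // hnd; exfalso; apply: hnd.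
    exists (subst_exch F k u).
    rewrite expr1 Fiu /subst_exch rmorphM /=.
    by rewrite -/(subst_exch F k (F k)) subst_notinv.
  set Q := \prod_(j < n | j != i) ('X_j : {mpoly R[n]}) ^+ a j.
  have eP : \prod_(j < n | j != i) (tofrac ('X_j : {mpoly R[n]})) ^+ a j
            = tofrac Q.
    by rewrite /Q rmorph_prod; apply: eq_bigr => j _; rewrite rmorphXn.
  rewrite eP in ea.
  have Fi0 : tofrac (F i) != 0.
    by rewrite tofrac_eq0; case: (Firr i).
  have Q1 : tofrac Q = 1.
    have Q0 : tofrac Q != 0.
      apply/eqP => Q0; move: ea; rewrite Q0 invr0 mulr0 => h.
      by rewrite h eqxx in Fi0.
    apply: (mulfI Fi0); rewrite mulr1.
    by rewrite {1}ea divfK.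
  have : Q = 1 by apply/eqP; rewrite -tofrac_eq Q1 rmorph1.
  move/(congr1 (meval (fun _ => (0:R)))).
  rewrite meval1 /Q rmorph_prod (bigD1 k) /=; last by rewrite eq_sym.
  rewrite rmorphXn /= mevalXU expr0n; case: (a k) apos => // m _ /=.
  by rewrite mul0r => /eqP; rewrite eq_sym oner_eq0.
split=> // d [c1 e1] [c2 e2].
apply/negP => dU.
have [_ _ h1] := Firr i; have [_ _ h2] := Firr k.
have c1U : c1 \is a GRing.unit by case: (h1 _ _ e1) => //; rewrite (negbTE dU).
have c2U : c2 \is a GRing.unit by case: (h2 _ _ e2) => //; rewrite (negbTE dU).
apply: nassoc; exists (c1 / c2); first by rewrite unitrMl ?unitrV.
by rewrite e1 e2 mulrA divrK.
Qed.
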